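(* Let $x\in\mathbb{R}$, written as $x=k+\sum_{n=1}^\infty a_n2^{-n}$ with $k\in\mathbb{Z}$ and $a_n\in\{0,1\}$. (1) If $x\in D$, then $\partial^+T(x)=\varnothing$. (2) If $x\notin D$ and there exists an integer $m\ge1$ such that $a_n+a_{n+1}=1$ for all $n\ge m$, then $$\partial^+T(x)=\begin{cases} m-1-2\sum_{j=1}^{m-1}a_j+[0,1] & \text{if } a_m=0,\\ m-1-2\sum_{j=1}^{m-1}a_j+[-1,0] & \text{if } a_m=1.\end{cases}$$ (3) If $x\notin D$ does not satisfy the hypothesis of (2), but there exists $m\ge1$ such that $a_{m+2i}+a_{m+2i+1}=1$ for all $i\ge0$, then $$\partial^+T(x)=\Big\{m-1-2\sum_{j=1}^{m-1}a_j\Big\}.$$ (4) If $x\notin D$ satisfies neither the hypothesis of (2) nor that of (3), then $\partial^+T(x)=\varnothing$.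
   Context: Let $\phi(x)=\operatorname{dist}(x,\mathbb{Z})$ and $T(x)=\sum_{n=0}^\infty 2^{-n}\phi(2^nx)$ be the Takagi function. $D$ denotes the set of dyadic rationals $\{k/2^{j}:k\in\mathbb{Z},j\ge0\}$; for $x\notin D$ the binary expansion is unique. The Fréchet superdifferential of an upper semicontinuous $f:\mathbb{R}\to\mathbb{R}$ at $x$ is $\partial^+f(x)=\{\xi\in\mathbb{R}: \limsup_{h\to0}\frac{f(x+h)-f(x)-\xi h}{|h|}\le0\}$. For $c\in\mathbb{R}$ and an interval $I$, $c+I=\{c+t:t\in I\}$. *)

(* Defs.v *)
From Stdlib Require Import Reals Lra Lia ZArith ClassicalEpsilon.
Open Scope R_scope.

Definition floorR (x : R) : Z := (up x - 1)%Z.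

Definition phi (x : R) : R :=
  Rmin (x - IZR (floorR x)) (IZR (floorR x) + 1 - x).

Definition takagi_partial (x : R) (N : nat) : R :=
  sum_f_R0 (fun n => phi (2 ^ n * x) / 2 ^ n) N.

Definition T (x : R) : R :=
  epsilon (inhabits 0) (fun l => Un_cv (takagi_partial x) l).

Definition dyadic (x : R) : Prop :=
  exists (k : Z) (j : nat), x = IZR k / 2 ^ j.

(* Frechet superdifferential: xi in d^+ f(x) iff
   limsup_{h->0} (f(x+h) - f(x) - xi h)/|h| <= 0 *)
Definition superdiff (f : R -> R) (x xi : R) : Prop :=
  forall eps : R, eps > 0 -> exists delta : R, delta > 0 /\
    forall h : R, h <> 0 -> Rabs h < delta ->
      (f (x + h) - f x - xi * h) / Rabs h <= eps.

(* psum a n = a 1 + ... + a n *)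
Fixpoint psum (a : nat -> R) (n : nat) : R :=
  match n with
  | O => 0
  | S p => psum a p + a (S p)
  end.

Definition bin_partial (a : nat -> R) (N : nat) : R :=
  psum (fun n => a n / 2 ^ n) N.

Definition cst (a : nat -> R) (m : nat) : R :=
  INR m - 1 - 2 * psum a (m - 1).

Definition hyp2 (a : nat -> R) (m : nat) : Prop :=
  (1 <= m)%nat /\ forall n : nat, (m <= n)%nat -> a n + a (S n) = 1.

Definition hyp3 (a : nat -> R) (m : nat) : Prop :=
  (1 <= m)%nat /\ forall i : nat, a (m + 2 * i)%nat + a (m + 2 * i + 1)%nat = 1.

(* Main.v *)
Require Import Defs.
From Stdlib Require Import Reals Lra Lia ZArith ClassicalEpsilon FunctionalExtensionality.
Open Scope R_scope.


Lemma floorR_spec : forall z, IZR (floorR z) <= z < IZR (floorR z) + 1.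
Proof.
  intro z; unfold floorR. destruct (archimed z) as [H1 H2].
  rewrite minus_IZR. simpl. lra.
Qed.

Lemma floorR_unique : forall z c, IZR c <= z < IZR c + 1 -> floorR z = c.
Proof.
  intros z c [H1 H2]. unfold floorR.
  assert (c + 1 = up z)%Z.
  { apply tech_up; rewrite plus_IZR; simpl; lra. }
  lia.
Qed.

Lemma floorR_shift : forall z c, floorR (z + IZR c) = (floorR z + c)%Z.
Proof.
  intros z c. apply floorR_unique. destruct (floorR_spec z).
  rewrite plus_IZR. lra.
Qed.

Lemma phi_shift : forall z c, phi (z + IZR c) = phi z.
Proof.
  intros z c. unfold phi. rewrite floorR_shift, plus_IZR.
  f_equal; ring.
Qed.

Lemma phi_01 : forall v, 0 <= v <= 1 -> phi v = Rmin v (1 - v).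
Proof.
  intros v Hv. destruct (Req_dec v 1) as [E|E].
  - subst. unfold phi. replace (floorR 1) with 1%Z.
    + simpl. unfold Rmin; repeat destruct Rle_dec; lra.
    + symmetry; apply floorR_unique; simpl; lra.
  - unfold phi. replace (floorR v) with 0%Z.
    + simpl. f_equal; ring.
    + symmetry; apply floorR_unique; simpl; lra.
Qed.

Lemma phi_lo : forall v, 0 <= v <= 1/2 -> phi v = v.
Proof.
  intros v Hv. rewrite phi_01 by lra. unfold Rmin; destruct Rle_dec; lra.
Qed.

Lemma phi_hi : forall v, 1/2 <= v <= 1 -> phi v = 1 - v.
Proof.
  intros v Hv. rewrite phi_01 by lra. unfold Rmin; destruct Rle_dec; lra.
Qed.

Lemma phi_red : forall z, exists t, 0 <= t < 1 /\ phi z = phi t /\ z = t + IZR (floorR z).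
Proof.
  intro z. exists (z - IZR (floorR z)). destruct (floorR_spec z).
  split; [lra|]. split; [|ring].
  rewrite <- (phi_shift (z - IZR (floorR z)) (floorR z)). f_equal; ring.
Qed.

Lemma phi_nonneg : forall z, 0 <= phi z.
Proof.
  intro z. destruct (phi_red z) as [t [Ht [E _]]]. rewrite E, phi_01 by lra.
  unfold Rmin; destruct Rle_dec; lra.
Qed.

Lemma phi_le_half : forall z, phi z <= 1/2.
Proof.
  intro z. destruct (phi_red z) as [t [Ht [E _]]]. rewrite E, phi_01 by lra.
  unfold Rmin; destruct Rle_dec; lra.
Qed.

Lemma phi_le_dist : forall z c, phi z <= Rabs (z - IZR c).
Proof.
  intros z c. destruct (floorR_spec z) as [H1 H2]. unfold phi.
  destruct (Z_le_gt_dec c (floorR z)) as [L|L].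
  - apply IZR_le in L. unfold Rmin; destruct Rle_dec;
    rewrite Rabs_right by lra; lra.
  - assert (L': (floorR z + 1 <= c)%Z) by lia. apply IZR_le in L'.
    rewrite plus_IZR in L'. change (IZR 1) with 1 in L'.
    unfold Rmin; destruct Rle_dec; rewrite Rabs_left1 by lra; lra.
Qed.

Lemma phi_attained : forall z, exists c, phi z = Rabs (z - IZR c).
Proof.
  intro z. destruct (floorR_spec z) as [H1 H2]. unfold phi.
  unfold Rmin; destruct Rle_dec.
  - exists (floorR z). rewrite Rabs_right by lra; ring.
  - exists (floorR z + 1)%Z. rewrite plus_IZR. change (IZR 1) with 1. rewrite Rabs_left1 by lra. ring.
Qed.

Lemma phi_lip_lo : forall z t, 0 <= t -> phi z - t <= phi (z + t).
Proof.
  intros z t Ht. destruct (phi_attained (z + t)) as [c Hc].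
  pose proof (phi_le_dist z c).
  assert (Rabs (z - IZR c) <= Rabs (z + t - IZR c) + t).
  { replace (z - IZR c) with ((z + t - IZR c) + - t) by ring.
    eapply Rle_trans; [apply Rabs_triang|]. rewrite Rabs_Ropp, (Rabs_right t) by lra. lra. }
  lra.
Qed.

Lemma phi_int_plus : forall c t, 0 <= t <= 1/2 -> phi (IZR c + t) = t.
Proof.
  intros c t Ht. rewrite Rplus_comm, phi_shift. apply phi_lo; lra.
Qed.

Lemma phi_two_step : forall z, phi z + phi (2 * z) / 2 <= 1/2.
Proof.
  intro z. destruct (phi_red z) as [t [Ht [E Ez]]]. rewrite E.
  assert (E2: phi (2 * z) = phi (2 * t)).
  { rewrite Ez. replace (2 * (t + IZR (floorR z))) with (2 * t + IZR (2 * floorR z)).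
    apply phi_shift. rewrite mult_IZR. simpl. ring. }
  rewrite E2, phi_01 by lra.
  destruct (Rle_dec (2*t) 1).
  - rewrite phi_01 by lra. unfold Rmin; repeat destruct Rle_dec; lra.
  - replace (2 * t) with ((2*t - 1) + IZR 1) by (simpl; ring).
    rewrite phi_shift, phi_01 by lra. unfold Rmin; repeat destruct Rle_dec; lra.
Qed.

Lemma pow2_pos : forall n, 0 < 2 ^ n.
Proof. intro n; apply pow_lt; lra. Qed.

Lemma Rdiv_le_0_compat : forall a b, 0 <= a -> 0 < b -> 0 <= a / b.
Proof. intros. unfold Rdiv. apply Rmult_le_pos; [auto|left; apply Rinv_0_lt_compat; auto]. Qed.

Lemma tp_cv_ex : forall z, exists l, Un_cv (takagi_partial z) l.
Proof.
  intro z.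
  assert (H: {l : R | Un_cv (fun N : nat => sum_f_R0 (fun n => phi (2 ^ n * z) / 2 ^ n) N) l}).
  { apply (Rseries_CV_comp _ (fun n => 1 * (/2) ^ n)).
    - intro n. pose proof (pow2_pos n). split.
      + apply Rdiv_le_0_compat; [apply phi_nonneg|lra].
      + rewrite pow_inv. unfold Rdiv. rewrite Rmult_1_l.
        pose proof (phi_le_half (2 ^ n * z)).
        rewrite <- (Rmult_1_l (/ 2 ^ n)) at 2. apply Rmult_le_compat_r.
        * left; apply Rinv_0_lt_compat; lra.
        * lra.
    - exists (/ (1 - /2)). apply GP_infinite. rewrite Rabs_right; lra. }
  destruct H as [l Hl]. exists l. exact Hl.
Qed.

Lemma T_cv : forall z, Un_cv (takagi_partial z) (T z).
Proof.
  intro z. unfold T. apply epsilon_spec. apply tp_cv_ex.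
Qed.

Lemma tp_S : forall z n, takagi_partial z (S n) = phi z + takagi_partial (2 * z) n / 2.
Proof.
  intros z n. unfold takagi_partial. rewrite decomp_sum by lia. simpl pred.
  unfold Rdiv at 3. rewrite (Rmult_comm (sum_f_R0 _ n)), scal_sum.
  f_equal.
  - simpl. rewrite Rmult_1_l. unfold Rdiv. rewrite Rinv_1. ring.
  - apply sum_eq. intros i _. simpl. rewrite (Rmult_comm 2 (2 ^ i)), Rmult_assoc. pose proof (pow2_pos i). field. lra.
Qed.

Lemma cv_shift : forall u l, Un_cv u l -> Un_cv (fun n => u (S n)) l.
Proof.
  intros u l H eps He. destruct (H eps He) as [N HN]. exists N. intros n Hn.
  apply HN. lia.
Qed.

Lemma cv_affine : forall u l c d, Un_cv u l -> Un_cv (fun n => c + u n / d) (c + l / d).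
Proof.
  intros u l c d H. destruct (Req_dec d 0) as [E|E].
  - subst. intros eps He. exists 0%nat. intros. unfold R_dist. unfold Rdiv.
    rewrite Rinv_0, !Rmult_0_r. replace (c + 0 - (c + 0)) with 0 by ring.
    rewrite Rabs_R0; lra.
  - intros eps He. destruct (H (eps * Rabs d)) as [N HN].
    { apply Rmult_lt_0_compat; [lra|apply Rabs_pos_lt; auto]. }
    exists N. intros n Hn. specialize (HN n Hn). unfold R_dist in *.
    replace (c + u n / d - (c + l / d)) with ((u n - l) / d) by (field; auto).
    unfold Rdiv. rewrite Rabs_mult, Rabs_inv.
    pose proof (Rabs_pos_lt d E).
    apply (Rmult_lt_reg_r (Rabs d)); auto. rewrite Rmult_assoc, Rinv_l by lra. lra.
Qed.

Lemma T_fe : forall z, T z = phi z + T (2 * z) / 2.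
Proof.
  intro z. apply (UL_sequence (fun n => takagi_partial z (S n))).
  - apply cv_shift, T_cv.
  - apply (Un_cv_ext (fun n => phi z + takagi_partial (2*z) n / 2)).
    + intro n. symmetry; apply tp_S.
    + apply cv_affine, T_cv.
Qed.

Lemma T_shift : forall z c, T (z + IZR c) = T z.
Proof.
  intros z c. unfold T.
  assert (E: takagi_partial (z + IZR c) = takagi_partial z).
  { apply functional_extensionality. intro n. unfold takagi_partial.
    apply sum_eq. intros i _. f_equal.
    replace (2 ^ i * (z + IZR c)) with (2 ^ i * z + IZR (c * 2 ^ Z.of_nat i)).
    - apply phi_shift.
    - rewrite mult_IZR, <- pow_IZR. simpl. ring. }
  rewrite E. reflexivity.
Qed.

Lemma lim_le : forall u l B, Un_cv u l -> (forall n, u n <= B) -> l <= B.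
Proof.
  intros u l B H HB. destruct (Rle_dec l B) as [|N]; auto.
  destruct (H (l - B)) as [M HM]; [lra|]. specialize (HM M (le_n _)).
  specialize (HB M). unfold R_dist in HM. apply Rabs_def2 in HM. lra.
Qed.

Lemma lim_ge : forall u l B, Un_cv u l -> (forall n, B <= u n) -> B <= l.
Proof.
  intros u l B H HB. destruct (Rle_dec B l) as [|N]; auto.
  destruct (H (B - l)) as [M HM]; [lra|]. specialize (HM M (le_n _)).
  specialize (HB M). unfold R_dist in HM. apply Rabs_def2 in HM. lra.
Qed.

Lemma tp_nonneg : forall z n, 0 <= takagi_partial z n.
Proof.
  intros z n. unfold takagi_partial. apply cond_pos_sum. intro i.
  apply Rdiv_le_0_compat; [apply phi_nonneg|apply pow2_pos].
Qed.

Lemma tp_mono : forall z n p, takagi_partial z n <= takagi_partial z (n + p).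
Proof.
  intros z n p. induction p.
  - rewrite Nat.add_0_r; lra.
  - rewrite Nat.add_succ_r. unfold takagi_partial in *. simpl.
    assert (0 <= phi (2 * 2 ^ (n + p) * z) / (2 * 2 ^ (n + p))).
    { apply Rdiv_le_0_compat; [apply phi_nonneg|]. pose proof (pow2_pos (n+p)); lra. }
    lra.
Qed.

Lemma tp_odd_bound : forall k z, takagi_partial z (2 * k + 1) <= 2/3.
Proof.
  induction k; intro z.
  - simpl. unfold takagi_partial. simpl. pose proof (phi_two_step z).
    rewrite Rmult_1_l, Rmult_1_r. unfold Rdiv at 1. rewrite Rinv_1, Rmult_1_r. lra.
  - replace (2 * S k + 1)%nat with (S (S (2 * k + 1))) by lia.
    rewrite !tp_S. pose proof (phi_two_step z). specialize (IHk (2 * (2 * z))).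
    lra.
Qed.

Lemma T_nonneg : forall z, 0 <= T z.
Proof. intro z. apply (lim_ge _ _ 0 (T_cv z)). apply tp_nonneg. Qed.

Lemma T_le : forall z, T z <= 2/3.
Proof.
  intro z. apply (lim_le _ _ _ (T_cv z)). intro n.
  eapply Rle_trans; [apply (tp_mono z n (n + 1))|].
  replace (n + (n + 1))%nat with (2 * n + 1)%nat by lia. apply tp_odd_bound.
Qed.

Lemma T_plus1 : forall z, T (z + 1) = T z.
Proof. intro z. apply (T_shift z 1). Qed.

Lemma T_13 : T (1/3) = 2/3 /\ T (2/3) = 2/3.
Proof.
  pose proof (T_fe (1/3)) as E1. pose proof (T_fe (2/3)) as E2.
  replace (2 * (1/3)) with (2/3) in E1 by field.
  replace (2 * (2/3)) with (1/3 + 1) in E2 by field. rewrite T_plus1 in E2.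
  rewrite phi_lo in E1 by lra. rewrite phi_hi in E2 by lra. split; lra.
Qed.

Lemma T_16 : T (1/6) = 1/2 /\ T (5/6) = 1/2.
Proof.
  destruct T_13 as [A B].
  pose proof (T_fe (1/6)) as E1. pose proof (T_fe (5/6)) as E2.
  replace (2 * (1/6)) with (1/3) in E1 by field.
  replace (2 * (5/6)) with (2/3 + 1) in E2 by field. rewrite T_plus1 in E2.
  rewrite phi_lo in E1 by lra. rewrite phi_hi in E2 by lra. split; lra.
Qed.

Lemma T_le_lo : forall v, 0 <= v <= 1/2 -> T v <= v + 1/3.
Proof.
  intros v Hv. rewrite T_fe, phi_lo by lra. pose proof (T_le (2*v)). lra.
Qed.

Lemma T_le_hi : forall v, 1/2 <= v <= 1 -> T v <= 4/3 - v.
Proof.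
  intros v Hv. rewrite T_fe, phi_hi by lra. pose proof (T_le (2*v)). lra.
Qed.

Lemma T_int : forall c, T (IZR c) = 0.
Proof.
  intro c. replace (IZR c) with (0 + IZR c) by ring. rewrite T_shift.
  apply (UL_sequence (takagi_partial 0)); [apply T_cv|].
  intros eps He. exists 0%nat. intros n _. unfold R_dist.
  assert (takagi_partial 0 n = 0).
  { unfold takagi_partial. rewrite (sum_eq _ (fun _ => 0)).
    - clear. induction n; simpl; [|rewrite IHn]; ring.
    - intros i _. rewrite Rmult_0_r, phi_lo by lra. unfold Rdiv; ring. }
  rewrite H. replace (0 - 0) with 0 by ring. rewrite Rabs_R0; lra.
Qed.

Definition yN (a : nat -> R) (y : R) (N : nat) : R := 2 ^ N * (y - bin_partial a N).
Definition sN (a : nat -> R) (N : nat) : R := INR N - 2 * psum a N.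

Definition digits (a : nat -> R) := forall n : nat, (1 <= n)%nat -> a n = 0 \/ a n = 1.

Lemma bp_S : forall a N, bin_partial a (S N) = bin_partial a N + a (S N) / 2 ^ (S N).
Proof. reflexivity. Qed.

Lemma yN_S : forall a y N, yN a y (S N) = 2 * yN a y N - a (S N).
Proof.
  intros. unfold yN. rewrite bp_S. pose proof (pow2_pos N). simpl. field. lra.
Qed.

Lemma yN_0 : forall a y, yN a y 0 = y.
Proof. intros. unfold yN. simpl. unfold bin_partial. simpl. ring. Qed.

Lemma sN_S : forall a N, sN a (S N) = sN a N + 1 - 2 * a (S N).
Proof. intros. unfold sN. rewrite S_INR. simpl. ring. Qed.

Lemma cst_sN : forall a m, (1 <= m)%nat -> cst a m = sN a (m - 1).
Proof.
  intros a m Hm. unfold cst, sN. destruct m; [lia|]. simpl (S m - 1)%nat.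
  rewrite Nat.sub_0_r, S_INR. ring.
Qed.

Lemma bp_diff : forall a, digits a -> forall N p,
  0 <= bin_partial a (N + p) - bin_partial a N <= / 2 ^ N - / 2 ^ (N + p).
Proof.
  intros a Ha N p. induction p.
  - rewrite Nat.add_0_r. lra.
  - rewrite Nat.add_succ_r, bp_S.
    assert (Hq: 0 <= a (S (N + p)) <= 1) by (destruct (Ha (S (N+p))) as [E|E]; [lia| |]; lra).
    pose proof (pow2_pos (N + p)).
    assert (E2: / 2 ^ S (N + p) = / 2 ^ (N + p) / 2) by (simpl; field; lra).
    assert (0 <= a (S (N + p)) / 2 ^ S (N + p) <= / 2 ^ S (N+p)).
    { unfold Rdiv. assert (0 < / 2 ^ S (N + p)) by (apply Rinv_0_lt_compat; apply pow2_pos).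
      nra. }
    rewrite E2 in *. lra.
Qed.

Lemma cv_shift_sub : forall u l N c, Un_cv u l -> Un_cv (fun M => u (N + M)%nat - c) (l - c).
Proof.
  intros u l N c H eps He. destruct (H eps He) as [M HM]. exists M. intros n Hn.
  unfold R_dist. replace (u (N + n)%nat - c - (l - c)) with (u (N + n)%nat - l) by ring.
  apply HM. lia.
Qed.

Lemma yN_range : forall a y, digits a -> Un_cv (bin_partial a) y ->
  forall N, 0 <= yN a y N <= 1.
Proof.
  intros a y Ha Hcv N. pose proof (cv_shift_sub _ _ N (bin_partial a N) Hcv) as H.
  pose proof (pow2_pos N).
  assert (0 <= y - bin_partial a N <= / 2 ^ N).
  { split.
    - apply (lim_ge _ _ _ H). intro p. apply bp_diff; auto.
    - apply (lim_le _ _ _ H). intro p. pose proof (bp_diff a Ha N p).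
      pose proof (pow2_pos (N + p)). assert (0 < / 2 ^ (N+p)) by (apply Rinv_0_lt_compat; lra).
      lra. }
  unfold yN. split.
  - apply Rmult_le_pos; lra.
  - replace 1 with (2 ^ N * / 2 ^ N) by (field; lra). apply Rmult_le_compat_l; lra.
Qed.

Lemma bp_int : forall a, digits a -> forall N, exists c, bin_partial a N = IZR c / 2 ^ N.
Proof.
  intros a Ha N. induction N.
  - exists 0%Z. unfold bin_partial. simpl. field.
  - destruct IHN as [c Hc]. rewrite bp_S, Hc. pose proof (pow2_pos N).
    destruct (Ha (S N)) as [E|E]; [lia| |]; rewrite E.
    + exists (2 * c)%Z. rewrite mult_IZR. simpl. field. lra.
    + exists (2 * c + 1)%Z. rewrite plus_IZR, mult_IZR. simpl. field. lra.
Qed.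

Lemma nondy_yN : forall a x k, digits a -> Un_cv (bin_partial a) (x - IZR k) -> ~ dyadic x ->
  forall N, 0 < yN a (x - IZR k) N < 1.
Proof.
  intros a x k Ha Hcv Hd N. destruct (yN_range a _ Ha Hcv N) as [H1 H2].
  destruct (bp_int a Ha N) as [c Hc]. pose proof (pow2_pos N).
  assert (E: 2 ^ N = IZR (2 ^ Z.of_nat N)) by (rewrite <- pow_IZR; reflexivity).
  unfold yN in *. rewrite Hc in *.
  split.
  - destruct H1 as [|H1]; auto. exfalso. apply Hd.
    exists (k * 2 ^ Z.of_nat N + c)%Z, N. rewrite plus_IZR, mult_IZR, <- E.
    assert (Hz: x - IZR k - IZR c / 2 ^ N = 0).
    { apply (Rmult_eq_reg_l (2 ^ N)); lra. }
    replace x with (IZR k + IZR c / 2 ^ N) by lra. field. lra.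
  - destruct H2 as [|H2]; auto. exfalso. apply Hd.
    exists (k * 2 ^ Z.of_nat N + c + 1)%Z, N. rewrite !plus_IZR, mult_IZR, <- E.
    assert (Hz: x - IZR k - IZR c / 2 ^ N = / 2 ^ N).
    { apply (Rmult_eq_reg_l (2 ^ N)); [|lra]. rewrite H2. field. lra. }
    replace x with (IZR k + IZR c / 2 ^ N + / 2 ^ N) by lra. simpl. field. lra.
Qed.

Lemma a_cases : forall a y, digits a -> Un_cv (bin_partial a) y -> forall N,
  (a (S N) = 0 /\ 0 <= yN a y N <= 1/2 /\ yN a y (S N) = 2 * yN a y N) \/
  (a (S N) = 1 /\ 1/2 <= yN a y N <= 1 /\ yN a y (S N) = 2 * yN a y N - 1).
Proof.
  intros a y Ha Hcv N. pose proof (yN_range a y Ha Hcv (S N)). pose proof (yN_range a y Ha Hcv N).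
  rewrite yN_S in *. destruct (Ha (S N)) as [E|E]; [lia| |]; rewrite E in *.
  - left. repeat split; lra.
  - right. repeat split; lra.
Qed.

Lemma scale : forall a y, digits a -> Un_cv (bin_partial a) y -> forall N v, 0 <= v <= 1 ->
  T (y + (v - yN a y N) / 2 ^ N) - T y =
  (sN a N * (v - yN a y N) + T v - T (yN a y N)) / 2 ^ N.
Proof.
  intros a y Ha Hcv N. induction N; intros w Hw.
  - rewrite yN_0. replace (sN a 0) with 0 by (unfold sN; simpl; ring). simpl pow.
    replace (y + (w - y) / 1) with w by field. field.
  - pose proof (pow2_pos N).
    destruct (a_cases a y Ha Hcv N) as [[E [H1 H2]]|[E [H1 H2]]].
    + set (v := w / 2).
      assert (Hv: 0 <= v <= 1) by (unfold v; lra).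
      specialize (IHN v Hv).
      replace (y + (w - yN a y (S N)) / 2 ^ S N) with (y + (v - yN a y N) / 2 ^ N)
        by (unfold v; rewrite H2; simpl; field; lra).
      rewrite IHN. rewrite (T_fe v), (T_fe (yN a y N)).
      rewrite (phi_lo v) by (unfold v; lra). rewrite (phi_lo (yN a y N)) by lra.
      replace (2 * v) with w by (unfold v; field). rewrite <- H2. rewrite sN_S, E.
      unfold v. rewrite H2. simpl. field. lra.
    + set (v := (w + 1) / 2).
      assert (Hv: 0 <= v <= 1) by (unfold v; lra).
      specialize (IHN v Hv).
      replace (y + (w - yN a y (S N)) / 2 ^ S N) with (y + (v - yN a y N) / 2 ^ N)
        by (unfold v; rewrite H2; simpl; field; lra).
      rewrite IHN. rewrite (T_fe v), (T_fe (yN a y N)).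
      rewrite (phi_hi v) by (unfold v; lra). rewrite (phi_hi (yN a y N)) by lra.
      replace (2 * v) with (w + 1) by (unfold v; field). rewrite T_plus1.
      replace (2 * yN a y N) with (yN a y (S N) + 1) by lra. rewrite T_plus1.
      rewrite sN_S, E.
      unfold v. rewrite H2. simpl. field. lra.
Qed.

Lemma small_pow : forall d, 0 < d -> exists N, forall M, (N <= M)%nat -> / 2 ^ M < d.
Proof.
  intros d Hd. destruct (pow_lt_1_zero (/2)) with (y := d) as [N HN]; auto.
  { rewrite Rabs_right; lra. }
  exists N. intros M HM. specialize (HN M HM). rewrite pow_inv in HN.
  rewrite Rabs_right in HN; auto. left. apply Rinv_0_lt_compat, pow2_pos.
Qed.

Lemma red_nec : forall x k a xi, digits a -> Un_cv (bin_partial a) (x - IZR k) ->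
  superdiff T x xi -> forall eps, eps > 0 -> exists N0, forall N, (N0 <= N)%nat ->
  forall v, 0 <= v <= 1 ->
  T v - T (yN a (x - IZR k) N) <= (xi - sN a N) * (v - yN a (x - IZR k) N)
                                  + eps * Rabs (v - yN a (x - IZR k) N).
Proof.
  intros x k a xi Ha Hcv Hs eps He.
  destruct (Hs eps He) as [d [Hd Hh]].
  destruct (small_pow d Hd) as [N0 HN0]. exists N0. intros N HN v Hv.
  set (y := x - IZR k). set (u := yN a y N).
  assert (Hu: 0 <= u <= 1) by (apply yN_range; auto).
  pose proof (pow2_pos N) as P.
  destruct (Req_dec v u) as [E|E].
  { rewrite E. replace (u - u) with 0 by ring. rewrite Rabs_R0. lra. }
  set (h := (v - u) / 2 ^ N).
  assert (Hne: v - u <> 0) by lra.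
  assert (Ha0: 0 < Rabs (v - u)) by (apply Rabs_pos_lt; auto).
  assert (Hab: Rabs h = Rabs (v - u) / 2 ^ N).
  { unfold h. unfold Rdiv. rewrite Rabs_mult, Rabs_inv, (Rabs_right (2 ^ N)); lra. }
  assert (h <> 0).
  { unfold h. unfold Rdiv. apply Rmult_integral_contrapositive. split; auto.
    apply Rinv_neq_0_compat; lra. }
  assert (Hlt: Rabs h < d).
  { rewrite Hab. specialize (HN0 N HN).
    assert (Rabs (v - u) <= 1) by (apply Rabs_le; lra).
    apply Rle_lt_trans with (/ 2 ^ N); auto. unfold Rdiv.
    rewrite <- (Rmult_1_l (/ 2 ^ N)) at 2. apply Rmult_le_compat_r; auto.
    left; apply Rinv_0_lt_compat; auto. }
  specialize (Hh h H Hlt).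
  assert (Ex: T (x + h) - T x = T (y + h) - T y).
  { unfold y. replace (x + h) with ((x - IZR k + h) + IZR k) by ring.
    rewrite T_shift. replace x with ((x - IZR k) + IZR k) at 2 by ring. rewrite T_shift. ring. }
  assert (Es: T (y + h) - T y = (sN a N * (v - u) + T v - T u) / 2 ^ N).
  { unfold h, u. apply scale; auto. }
  replace (T (x + h) - T x - xi * h) with ((sN a N * (v - u) + T v - T u - xi * (v - u)) / 2 ^ N)
    in Hh by (rewrite Ex, Es; unfold h; field; lra).
  rewrite Hab in Hh.
  replace ((sN a N * (v - u) + T v - T u - xi * (v - u)) / 2 ^ N / (Rabs (v - u) / 2 ^ N))
    with ((sN a N * (v - u) + T v - T u - xi * (v - u)) / Rabs (v - u)) in Hh by (field; lra).
  apply (Rmult_le_compat_r (Rabs (v - u))) in Hh; [|lra].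
  unfold Rdiv in Hh. rewrite Rmult_assoc, Rinv_l, Rmult_1_r in Hh by lra.
  lra.
Qed.

Lemma Rmult_le_0_r : forall p q, p <= 0 -> 0 <= q -> p * q <= 0.
Proof. intros. nra. Qed.

Lemma red_suf : forall x k a xi N, digits a -> Un_cv (bin_partial a) (x - IZR k) ->
  0 < yN a (x - IZR k) N < 1 ->
  (forall v, 0 <= v <= 1 -> T v - T (yN a (x - IZR k) N) <= (xi - sN a N) * (v - yN a (x - IZR k) N)) ->
  superdiff T x xi.
Proof.
  intros x k a xi N Ha Hcv Hu Hv eps He.
  set (y := x - IZR k) in *. set (u := yN a y N) in *.
  pose proof (pow2_pos N) as P.
  exists (Rmin u (1 - u) / 2 ^ N). split.
  { unfold Rdiv. apply Rmult_lt_0_compat; [|apply Rinv_0_lt_compat; auto].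
    unfold Rmin; destruct Rle_dec; lra. }
  intros h Hh Hlt.
  set (v := u + 2 ^ N * h).
  assert (Hav: Rabs (2 ^ N * h) < Rmin u (1 - u)).
  { rewrite Rabs_mult, (Rabs_right (2 ^ N)) by lra.
    apply (Rmult_lt_reg_r (/ 2 ^ N)); [apply Rinv_0_lt_compat; auto|].
    replace (2 ^ N * Rabs h * / 2 ^ N) with (Rabs h) by (field; lra). exact Hlt. }
  apply Rabs_def2 in Hav.
  assert (Hv01: 0 <= v <= 1) by (unfold v, Rmin in *; destruct Rle_dec; lra).
  specialize (Hv v Hv01).
  assert (Ex: T (x + h) - T x = T (y + h) - T y).
  { unfold y. replace (x + h) with ((x - IZR k + h) + IZR k) by ring.
    rewrite T_shift. replace x with ((x - IZR k) + IZR k) at 2 by ring. rewrite T_shift. ring. }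
  assert (Eh: h = (v - u) / 2 ^ N) by (unfold v; field; lra).
  assert (Es: T (y + h) - T y = (sN a N * (v - u) + T v - T u) / 2 ^ N).
  { rewrite Eh. unfold u. apply scale; auto. }
  assert (Hnum: T (x + h) - T x - xi * h <= 0).
  { rewrite Ex, Es, Eh. unfold Rdiv.
    replace ((sN a N * (v - u) + T v - T u) * / 2 ^ N - xi * ((v - u) * / 2 ^ N))
      with ((T v - T u - (xi - sN a N) * (v - u)) * / 2 ^ N) by ring.
    apply Rmult_le_0_r; [lra|]. left; apply Rinv_0_lt_compat; auto. }
  assert (0 < Rabs h) by (apply Rabs_pos_lt; auto).
  unfold Rdiv. apply Rle_trans with 0; [|lra].
  apply Rmult_le_0_r; [auto|]. left; apply Rinv_0_lt_compat; auto.
Qed.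

Lemma exists_nat_gt : forall r, exists n, r < INR n.
Proof.
  intro r. destruct (archimed r) as [H1 _]. destruct (Z_lt_le_dec (up r) 0) as [L|L].
  - exists 0%nat. apply IZR_lt in L. simpl. lra.
  - exists (Z.to_nat (up r)). rewrite INR_IZR_INZ, Z2Nat.id by lia. lra.
Qed.

Lemma le_eps : forall p q, (forall eps, 0 < eps < 1/2 -> p <= q + eps) -> p <= q.
Proof.
  intros p q H. destruct (Rle_dec p q) as [|N]; auto.
  specialize (H (Rmin ((p - q)/2) (1/4))). unfold Rmin in H.
  destruct Rle_dec; specialize (H ltac:(lra)); lra.
Qed.

Lemma geo4 : forall (f : nat -> R) B, (forall j, f (S j) = 4 * f j) ->
  (forall j, Rabs (f j) <= B) -> f 0%nat = 0.
Proof.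
  intros f B Hs Hb. destruct (Req_dec (f 0%nat) 0) as [|N]; auto. exfalso.
  assert (Hp: 0 < Rabs (f 0%nat)) by (apply Rabs_pos_lt; auto).
  assert (HB: 0 <= B) by (pose proof (Hb 0%nat); lra).
  assert (Hj: forall j, f j = 4 ^ j * f 0%nat).
  { induction j; simpl; [ring|]. rewrite Hs, IHj. ring. }
  assert (H24: forall j, 2 ^ j <= 4 ^ j).
  { induction j; simpl; [lra|]. pose proof (pow2_pos j). lra. }
  destruct (small_pow (Rabs (f 0%nat) / (B + 1))) as [J HJ].
  { apply Rdiv_lt_0_compat; lra. }
  specialize (HJ J (le_n _)). specialize (Hb J). rewrite Hj, Rabs_mult in Hb.
  rewrite (Rabs_right (4 ^ J)) in Hb by (apply Rle_ge, pow_le; lra).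
  pose proof (H24 J). pose proof (pow2_pos J).
  assert (2 ^ J * Rabs (f 0%nat) <= B) by nra.
  apply (Rmult_lt_compat_l (2 ^ J)) in HJ; auto.
  rewrite Rinv_r in HJ by lra.
  assert (Hq: 1 < 2 ^ J * Rabs (f 0%nat) / (B + 1)) by (unfold Rdiv in *; lra).
  apply (Rmult_lt_compat_r (B + 1)) in Hq; [|lra].
  unfold Rdiv in Hq. rewrite Rmult_assoc, Rinv_l, Rmult_1_r in Hq by lra. lra.
Qed.

Definition Pairs (a : nat -> R) (N : nat) := forall j, a (S (N + 2 * j)) + a (S (S (N + 2 * j))) = 1.

Lemma sN_SS : forall a n, sN a (S (S n)) = sN a n + 2 - 2 * (a (S n) + a (S (S n))).
Proof. intros. rewrite !sN_S. ring. Qed.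

Lemma sN_pairs : forall a N, Pairs a N -> forall j, sN a (N + 2 * j) = sN a N.
Proof.
  intros a N H j. induction j.
  - rewrite Nat.add_0_r. reflexivity.
  - replace (N + 2 * S j)%nat with (S (S (N + 2 * j))) by lia.
    rewrite sN_SS, (H j). lra.
Qed.

Lemma hyp3_Pairs : forall a N, hyp3 a (S N) -> Pairs a N.
Proof.
  intros a N [_ H] j. specialize (H j).
  replace (S N + 2 * j)%nat with (S (N + 2 * j)) in H by lia.
  replace (S (N + 2 * j) + 1)%nat with (S (S (N + 2 * j))) in H by lia. exact H.
Qed.

Lemma Pairs_hyp3 : forall a N, Pairs a N -> hyp3 a (S N).
Proof.
  intros a N H. split; [lia|]. intro j. specialize (H j).
  replace (S N + 2 * j)%nat with (S (N + 2 * j)) by lia.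
  replace (S (N + 2 * j) + 1)%nat with (S (S (N + 2 * j))) by lia. exact H.
Qed.

Lemma T_yN_step : forall a y, digits a -> Un_cv (bin_partial a) y -> forall N,
  T (yN a y N) = phi (yN a y N) + T (yN a y (S N)) / 2.
Proof.
  intros a y Ha Hcv N. rewrite T_fe at 1.
  destruct (a_cases a y Ha Hcv N) as [[E [H1 H2]]|[E [H1 H2]]].
  - rewrite H2. reflexivity.
  - replace (2 * yN a y N) with (yN a y (S N) + 1) by lra. rewrite T_plus1. reflexivity.
Qed.

Lemma T_max_pairs : forall a y, digits a -> Un_cv (bin_partial a) y -> forall N,
  Pairs a N -> T (yN a y N) = 2/3.
Proof.
  intros a y Ha Hcv N HP.
  assert (Hstep: forall n, a (S n) + a (S (S n)) = 1 ->
     T (yN a y n) - 2/3 = (T (yN a y (S (S n))) - 2/3) / 4).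
  { intros n Hn. rewrite (T_yN_step a y Ha Hcv n), (T_yN_step a y Ha Hcv (S n)).
    destruct (a_cases a y Ha Hcv n) as [[E [H1 H2]]|[E [H1 H2]]];
    destruct (a_cases a y Ha Hcv (S n)) as [[E' [H1' H2']]|[E' [H1' H2']]];
    rewrite E, E' in Hn; try lra.
    - rewrite (phi_lo (yN a y n)) by lra. rewrite (phi_hi (yN a y (S n))) by lra.
      rewrite H2. lra.
    - rewrite (phi_hi (yN a y n)) by lra. rewrite (phi_lo (yN a y (S n))) by lra.
      rewrite H2. lra. }
  set (f := fun j => T (yN a y (N + 2 * j)) - 2/3).
  assert (f 0%nat = 0).
  { apply (geo4 f 1).
    - intro j. unfold f. replace (N + 2 * S j)%nat with (S (S (N + 2 * j))) by lia.
      rewrite (Hstep (N + 2 * j)%nat (HP j)). field.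
    - intro j. unfold f. pose proof (T_nonneg (yN a y (N + 2 * j))).
      pose proof (T_le (yN a y (N + 2 * j))). apply Rabs_le. lra. }
  unfold f in H. rewrite Nat.add_0_r in H. lra.
Qed.

Lemma y_const : forall a y, digits a -> Un_cv (bin_partial a) y -> forall N b c,
  (forall j, a (S (N + 2 * j)) = b /\ a (S (S (N + 2 * j))) = 1 - b) ->
  c = (2 * b + (1 - b)) / 3 ->
  yN a y N = c.
Proof.
  intros a y Ha Hcv N b c Hd Hc.
  set (f := fun j => yN a y (N + 2 * j) - c).
  assert (f 0%nat = 0).
  { apply (geo4 f 2).
    - intro j. unfold f. replace (N + 2 * S j)%nat with (S (S (N + 2 * j))) by lia.
      rewrite !yN_S. destruct (Hd j) as [E1 E2]. rewrite E1, E2. rewrite Hc. field.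
    - intro j. unfold f. pose proof (yN_range a y Ha Hcv (N + 2 * j)).
      destruct (Ha (S N)) as [E|E]; [lia| |];
      destruct (Hd 0%nat) as [E1 _]; rewrite Nat.add_0_r in E1; rewrite E1 in E; subst b c;
      apply Rabs_le; lra. }
  unfold f in H. rewrite Nat.add_0_r in H. lra.
Qed.

Lemma alt_digits : forall a m b, hyp2 a (S m) -> a (S m) = b ->
  forall j, a (S (m + 2 * j)) = b /\ a (S (S (m + 2 * j))) = 1 - b.
Proof.
  intros a m b [_ H] E j. induction j.
  - rewrite Nat.add_0_r. split; auto. specialize (H (S m) (le_n _)). lra.
  - replace (m + 2 * S j)%nat with (S (S (m + 2 * j))) by lia.
    destruct IHj as [E1 E2].
    assert (a (S (S (S (m + 2 * j)))) = b).
    { specialize (H (S (S (m + 2 * j))) ltac:(lia)). lra. }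
    split; auto. specialize (H (S (S (S (m + 2 * j)))) ltac:(lia)). lra.
Qed.

Lemma alt_shift : forall a m b, (forall j, a (S (m + 2 * j)) = b /\ a (S (S (m + 2 * j))) = 1 - b) ->
  forall i, (forall j, a (S (m + 2 * i + 2 * j)) = b /\ a (S (S (m + 2 * i + 2 * j))) = 1 - b).
Proof.
  intros a m b H i j. replace (m + 2 * i + 2 * j)%nat with (m + 2 * (i + j))%nat by lia. apply H.
Qed.

Lemma alt_pairs : forall a m b, (forall j, a (S (m + 2 * j)) = b /\ a (S (S (m + 2 * j))) = 1 - b) ->
  Pairs a m.
Proof. intros a m b H j. destruct (H j). lra. Qed.

Lemma y13_hyp2 : forall a y, digits a -> Un_cv (bin_partial a) y -> forall N,
  yN a y N = 1/3 -> hyp2 a (S N).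
Proof.
  intros a y Ha Hcv N E.
  assert (H: forall j, yN a y (N + 2 * j) = 1/3 /\ a (S (N + 2 * j)) = 0 /\ a (S (S (N + 2 * j))) = 1).
  { induction j.
    - rewrite Nat.add_0_r.
      destruct (a_cases a y Ha Hcv N) as [[E1 [H1 H2]]|[E1 [H1 H2]]]; [|lra].
      destruct (a_cases a y Ha Hcv (S N)) as [[E2 [H3 H4]]|[E2 [H3 H4]]]; [lra|].
      auto.
    - destruct IHj as [E0 _]. replace (N + 2 * S j)%nat with (S (S (N + 2 * j))) by lia.
      set (n := (N + 2 * j)%nat) in *.
      destruct (a_cases a y Ha Hcv n) as [[E1 [H1 H2]]|[E1 [H1 H2]]]; [|lra].
      destruct (a_cases a y Ha Hcv (S n)) as [[E2 [H3 H4]]|[E2 [H3 H4]]]; [lra|].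
      assert (yN a y (S (S n)) = 1/3) by lra.
      destruct (a_cases a y Ha Hcv (S (S n))) as [[E3 [H5 H6]]|[E3 [H5 H6]]]; [|lra].
      destruct (a_cases a y Ha Hcv (S (S (S n)))) as [[E4 [H7 H8]]|[E4 [H7 H8]]]; [lra|].
      auto. }
  split; [lia|]. intros n Hn.
  destruct (Nat.Even_or_Odd (n - S N)) as [[q Hq]|[q Hq]].
  - replace n with (S (N + 2 * q)) by lia. destruct (H q) as [_ [E1 E2]]. lra.
  - replace n with (S (S (N + 2 * q))) by lia. destruct (H q) as [_ [_ E2]].
    destruct (H (S q)) as [_ [E1 _]]. replace (N + 2 * S q)%nat with (S (S (N + 2 * q))) in E1 by lia.
    lra.
Qed.

Definition Cond (a : nat -> R) y xi eps N0 :=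
  forall N, (N0 <= N)%nat ->
    (yN a y N < 2/3 -> - eps <= xi - sN a N) /\ (1/3 < yN a y N -> xi - sN a N <= eps).

Lemma auto_inv : forall a y xi eps N0, digits a -> Un_cv (bin_partial a) y -> eps < 1/2 ->
  Cond a y xi eps N0 -> forall N, (N0 <= N)%nat ->
  - eps <= xi - sN a N <= eps ->
  a (S N) + a (S (S N)) = 1 /\ - eps <= xi - sN a (S (S N)) <= eps.
Proof.
  intros a y xi eps N0 Ha Hcv He HC N HN Hs.
  destruct (HC (S N) ltac:(lia)) as [CA CB].
  rewrite sN_S in CA, CB.
  destruct (a_cases a y Ha Hcv N) as [[E1 [H1 H2]]|[E1 [H1 H2]]];
  destruct (a_cases a y Ha Hcv (S N)) as [[E2 [H3 H4]]|[E2 [H3 H4]]];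
  rewrite ?E1, ?E2 in *; rewrite sN_SS, E1, E2.
  - assert (~ yN a y (S N) < 2/3) by (intro Q; specialize (CA Q); lra). lra.
  - split; lra.
  - split; lra.
  - assert (~ 1/3 < yN a y (S N)) by (intro Q; specialize (CB Q); lra). lra.
Qed.

Lemma auto_chain : forall a y xi eps N0, digits a -> Un_cv (bin_partial a) y -> eps < 1/2 ->
  Cond a y xi eps N0 -> forall N1, (N0 <= N1)%nat ->
  - eps <= xi - sN a N1 <= eps ->
  Pairs a N1 /\ forall j, - eps <= xi - sN a (N1 + 2 * j) <= eps.
Proof.
  intros a y xi eps N0 Ha Hcv He HC N1 HN Hs.
  assert (H: forall j, - eps <= xi - sN a (N1 + 2 * j) <= eps).
  { induction j.
    - rewrite Nat.add_0_r. auto.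
    - replace (N1 + 2 * S j)%nat with (S (S (N1 + 2 * j))) by lia.
      apply (auto_inv a y xi eps N0 Ha Hcv He HC); auto. lia. }
  split; auto. intro j. apply (auto_inv a y xi eps N0 Ha Hcv He HC); auto. lia.
Qed.

Lemma auto_desc : forall a y xi eps N0, digits a -> Un_cv (bin_partial a) y -> 0 < eps < 1/2 ->
  Cond a y xi eps N0 -> ~ (exists m', hyp2 a m') -> forall K N, (N0 <= N)%nat ->
  ((eps < xi - sN a N <= INR K) \/ (- INR K <= xi - sN a N < - eps)) ->
  exists N1, (N <= N1)%nat /\ - eps <= xi - sN a N1 <= eps.
Proof.
  intros a y xi eps N0 Ha Hcv He HC Hno. induction K; intros N HN Hs.
  - simpl in Hs. lra.
  - rewrite S_INR in Hs. destruct (HC N HN) as [CA CB].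
    destruct (HC (S N) ltac:(lia)) as [CA' CB']. rewrite sN_S in CA', CB'.
    destruct (a_cases a y Ha Hcv N) as [[E1 [H1 H2]]|[E1 [H1 H2]]]; rewrite E1 in *.
    +
      assert (Hgt: eps < xi - sN a N).
      { destruct Hs as [Hs|Hs]; [lra|]. assert (~ yN a y N < 2/3) by (intro Q; specialize (CA Q); lra). lra. }
      assert (yN a y N <= 1/3) by (destruct (Rle_dec (yN a y N) (1/3)); auto; specialize (CB ltac:(lra)); lra).
      destruct (Rle_dec (xi - sN a (S N)) eps) as [L|L].
      * destruct (Rle_dec (- eps) (xi - sN a (S N))) as [L'|L'].
        -- exists (S N). split; [lia|lra].
        -- exfalso. rewrite sN_S, E1 in L'.
           assert (~ yN a y (S N) < 2/3) by (intro Q; specialize (CA' Q); lra).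
           apply Hno. exists (S N). apply (y13_hyp2 a y Ha Hcv). lra.
      * destruct (IHK (S N)) as [N1 [HN1 HN1']]; [lia| |].
        { left. rewrite sN_S, E1 in *. destruct Hs; lra. }
        exists N1. split; [lia|auto].
    + assert (Hlt: xi - sN a N < - eps).
      { destruct Hs as [Hs|Hs]; [|lra]. assert (~ 1/3 < yN a y N) by (intro Q; specialize (CB Q); lra). lra. }
      assert (2/3 <= yN a y N) by (destruct (Rle_dec (2/3) (yN a y N)); auto; specialize (CA ltac:(lra)); lra).
      destruct (Rle_dec (- eps) (xi - sN a (S N))) as [L|L].
      * destruct (Rle_dec (xi - sN a (S N)) eps) as [L'|L'].
        -- exists (S N). split; [lia|lra].
        -- exfalso. rewrite sN_S, E1 in L'.
           assert (~ 1/3 < yN a y (S N)) by (intro Q; specialize (CB' Q); lra).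
           apply Hno. exists (S (S N)). apply (y13_hyp2 a y Ha Hcv). lra.
      * destruct (IHK (S N)) as [N1 [HN1 HN1']]; [lia| |].
        { right. rewrite sN_S, E1 in *. destruct Hs; lra. }
        exists N1. split; [lia|auto].
Qed.

Lemma auto_main : forall a y xi eps N0, digits a -> Un_cv (bin_partial a) y -> 0 < eps < 1/2 ->
  Cond a y xi eps N0 -> ~ (exists m', hyp2 a m') ->
  exists N1, (N0 <= N1)%nat /\ Pairs a N1 /\ forall j, - eps <= xi - sN a (N1 + 2 * j) <= eps.
Proof.
  intros a y xi eps N0 Ha Hcv He HC Hno.
  assert (Hex: exists N1, (N0 <= N1)%nat /\ - eps <= xi - sN a N1 <= eps).
  { destruct (Rle_dec (- eps) (xi - sN a N0)) as [L|L];
    [destruct (Rle_dec (xi - sN a N0) eps) as [L'|L']|].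
    - exists N0. split; [lia|lra].
    - destruct (exists_nat_gt (xi - sN a N0)) as [K HK].
      apply (auto_desc a y xi eps N0 Ha Hcv He HC Hno K N0); [lia|]. left; lra.
    - destruct (exists_nat_gt (- (xi - sN a N0))) as [K HK].
      apply (auto_desc a y xi eps N0 Ha Hcv He HC Hno K N0); [lia|]. right; lra. }
  destruct Hex as [N1 [HN1 Hs]]. exists N1. split; auto.
  apply (auto_chain a y xi eps N0 Ha Hcv (proj2 He) HC N1 HN1 Hs).
Qed.

Lemma F_int : forall m c, T (IZR c + / 2 ^ m) - T (IZR c) = INR m / 2 ^ m.
Proof.
  induction m; intro c.
  - simpl. rewrite Rinv_1, T_plus1. field.
  - rewrite (T_fe (IZR c + / 2 ^ S m)), (T_fe (IZR c)).
    pose proof (pow2_pos m).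
    assert (0 < / 2 ^ S m <= 1/2).
    { simpl. rewrite Rinv_mult. split.
      - apply Rmult_lt_0_compat; apply Rinv_0_lt_compat; lra.
      - assert (/ 2 ^ m <= 1).
        { assert (1 <= 2 ^ m) by (apply pow_R1_Rle; lra).
          rewrite <- Rinv_1. apply Rinv_le_contravar; lra. }
        assert (0 < / 2 ^ m) by (apply Rinv_0_lt_compat; lra). nra. }
    rewrite phi_int_plus by lra.
    replace (IZR c) with (IZR c + 0) at 2 by ring. rewrite phi_int_plus by lra.
    replace (2 * (IZR c + / 2 ^ S m)) with (IZR (2 * c) + / 2 ^ m)
      by (rewrite mult_IZR; simpl; field; lra).
    replace (2 * (IZR c + 0)) with (IZR (2 * c)) by (rewrite mult_IZR; ring).
    assert (Hm := IHm (2 * c)%Z). rewrite S_INR.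
    change (2 ^ S m) with (2 * 2 ^ m).
    replace (2 * IZR c) with (IZR (2 * c)) by (rewrite mult_IZR; ring).
    replace (T (IZR (2 * c) + / 2 ^ m)) with (T (IZR (2 * c)) + INR m / 2 ^ m) by lra.
    field. lra.
Qed.

Lemma F_dy : forall j z n, (j <= n)%nat -> (exists c, z = IZR c / 2 ^ j) ->
  (INR n - 2 * INR j) / 2 ^ n <= T (z + / 2 ^ n) - T z.
Proof.
  induction j; intros z n Hn [c Hc].
  - simpl in Hc. rewrite Hc. replace (IZR c / 1) with (IZR c) by field. rewrite F_int.
    right. simpl INR. field. apply pow_nonzero; lra.
  - destruct n as [|n]; [lia|].
    pose proof (pow2_pos n).
    rewrite (T_fe (z + / 2 ^ S n)), (T_fe z).
    assert (Ht: 0 <= / 2 ^ S n) by (left; apply Rinv_0_lt_compat, pow2_pos).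
    pose proof (phi_lip_lo z (/ 2 ^ S n) Ht).
    assert (IH := IHj (2 * z) n ltac:(lia)).
    replace (2 * (z + / 2 ^ S n)) with (2 * z + / 2 ^ n) by (simpl; field; lra).
    assert (IH' : (INR n - 2 * INR j) / 2 ^ n <= T (2 * z + / 2 ^ n) - T (2 * z)).
    { apply IH. exists c. rewrite Hc. simpl. field. pose proof (pow2_pos j). lra. }
    assert (Eq: (INR (S n) - 2 * INR (S j)) / 2 ^ S n
               = - / 2 ^ S n + ((INR n - 2 * INR j) / 2 ^ n) / 2).
    { rewrite !S_INR. change (2 ^ S n) with (2 * 2 ^ n). field. lra. }
    rewrite Eq. lra.
Qed.

Lemma part1 : forall x xi, dyadic x -> ~ superdiff T x xi.
Proof.
  intros x xi [c [j Hx]] Hs.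
  destruct (Hs 1 ltac:(lra)) as [d [Hd Hh]].
  destruct (small_pow d Hd) as [N1 HN1].
  destruct (exists_nat_gt (2 * INR j + xi + 1)) as [N2 HN2].
  set (n := (N1 + N2 + j)%nat).
  assert (Hn: INR N2 <= INR n) by (apply le_INR; unfold n; lia).
  pose proof (pow2_pos n).
  set (h := / 2 ^ n).
  assert (Hh0: 0 < h) by (apply Rinv_0_lt_compat; lra).
  specialize (Hh h ltac:(lra)).
  rewrite Rabs_right in Hh by lra.
  specialize (Hh (HN1 n ltac:(unfold n; lia))).
  assert (HF := F_dy j x n ltac:(unfold n; lia) (ex_intro _ c Hx)).
  fold h in HF.
  assert (E: (INR n - 2 * INR j) / 2 ^ n = (INR n - 2 * INR j) * h) by (unfold h; field; lra).
  rewrite E in HF.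
  assert (Q: (T (x + h) - T x - xi * h) / h >= INR n - 2 * INR j - xi).
  { apply Rle_ge. apply (Rmult_le_reg_r h); auto. unfold Rdiv.
    rewrite Rmult_assoc, Rinv_l, Rmult_1_r by lra. nra. }
  lra.
Qed.

Lemma cond_of_nec : forall x k a xi eps N0, 0 < eps ->
  (forall N, (N0 <= N)%nat -> forall v, 0 <= v <= 1 ->
    T v - T (yN a (x - IZR k) N) <= (xi - sN a N) * (v - yN a (x - IZR k) N)
                                  + eps * Rabs (v - yN a (x - IZR k) N)) ->
  Cond a (x - IZR k) xi eps N0.
Proof.
  intros x k a xi eps N0 He H N HN. destruct T_13 as [T1 T2].
  set (u := yN a (x - IZR k) N) in *. pose proof (T_le u).
  split; intro Hu.
  - specialize (H N HN (2/3) ltac:(lra)). fold u in H. rewrite T2 in H.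
    rewrite Rabs_right in H by lra.
    destruct (Rle_dec (- eps) (xi - sN a N)); auto. nra.
  - specialize (H N HN (1/3) ltac:(lra)). fold u in H. rewrite T1 in H.
    rewrite Rabs_left1 in H by lra.
    destruct (Rle_dec (xi - sN a N) eps); auto. nra.
Qed.

Lemma part3_pairs_hyp2 : forall a N N1 p, Pairs a N -> Pairs a N1 -> (N1 + N = 2 * p + 1)%nat ->
  hyp2 a (S (N1 + N)).
Proof.
  intros a N N1 p HP HP1 Hp. split; [lia|]. intros n Hn.
  destruct (Nat.Even_or_Odd (n - S N)) as [[q Hq]|[q Hq]].
  - replace n with (S (N + 2 * q)) by lia. apply HP.
  - destruct (Nat.Even_or_Odd (n - S N1)) as [[q' Hq']|[q' Hq']].
    + replace n with (S (N1 + 2 * q')) by lia. apply HP1.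
    + exfalso. lia.
Qed.

Theorem theorem2p6 :
  forall (x : R) (k : Z) (a : nat -> R),
    (forall n : nat, (1 <= n)%nat -> a n = 0 \/ a n = 1) ->
    Un_cv (bin_partial a) (x - IZR k) ->
    (* (1) *)
    (dyadic x -> forall xi : R, ~ superdiff T x xi) /\
    (* (2) *)
    (forall m : nat, ~ dyadic x -> hyp2 a m ->
       (a m = 0 -> forall xi : R,
          superdiff T x xi <-> (cst a m <= xi <= cst a m + 1)) /\
       (a m = 1 -> forall xi : R,
          superdiff T x xi <-> (cst a m - 1 <= xi <= cst a m))) /\
    (* (3) *)
    (forall m : nat, ~ dyadic x -> (~ exists m', hyp2 a m') -> hyp3 a m ->
       forall xi : R, superdiff T x xi <-> xi = cst a m) /\
    (* (4) *)
    (~ dyadic x -> (~ exists m', hyp2 a m') -> (~ exists m', hyp3 a m') ->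
       forall xi : R, ~ superdiff T x xi).
Proof.
  intros x k a Ha Hcv.
  assert (Hdig : digits a) by exact Ha.
  destruct T_13 as [T1 T2]. destruct T_16 as [T3 T4].
  split; [|split; [|split]].
  - intros Hd xi. apply part1; auto.
  - intros m Hd H2. destruct m as [|N]; [destruct H2; lia|].
    rewrite cst_sN by lia. replace (S N - 1)%nat with N by lia.
    split.
    + intros E0 xi.
      pose proof (alt_digits a N 0 H2 E0) as Alt.
      assert (Hy: forall i, yN a (x - IZR k) (N + 2 * i) = 1/3).
      { intro i. apply (y_const a _ Hdig Hcv (N + 2 * i) 0); [|field].
        apply (alt_shift a N 0 Alt i). }
      assert (Hs: forall i, sN a (N + 2 * i) = sN a N).
      { apply sN_pairs. apply (alt_pairs a N 0 Alt). }
      split.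
      * intro Hsd.
        assert (B: forall eps, 0 < eps < 1/2 ->
                   - eps <= xi - sN a N /\ xi - sN a N <= 1 + eps).
        { intros eps He. destruct (red_nec x k a xi Hdig Hcv Hsd eps ltac:(lra)) as [N0 HN0].
          specialize (HN0 (N + 2 * N0)%nat ltac:(lia)).
          rewrite Hy, Hs in HN0. rewrite T1 in HN0.
          pose proof (HN0 (2/3) ltac:(lra)) as V1. pose proof (HN0 (1/6) ltac:(lra)) as V2.
          rewrite T2 in V1. rewrite T3 in V2.
          rewrite Rabs_right in V1 by lra. rewrite Rabs_left1 in V2 by lra.
          split; lra. }
        split.
        -- apply le_eps. intros eps He. destruct (B eps He). lra.
        -- apply le_eps. intros eps He. destruct (B eps He). lra.
      * intros [L U]. apply (red_suf x k a xi N Hdig Hcv).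
        { apply nondy_yN; auto. }
        intros v Hv. specialize (Hy 0%nat). rewrite Nat.add_0_r in Hy. rewrite Hy, T1.
        destruct (Rle_dec (1/3) v).
        -- pose proof (T_le v). nra.
        -- pose proof (T_le_lo v ltac:(lra)). nra.
    + intros E1 xi.
      pose proof (alt_digits a N 1 H2 E1) as Alt.
      assert (Hy: forall i, yN a (x - IZR k) (N + 2 * i) = 2/3).
      { intro i. apply (y_const a _ Hdig Hcv (N + 2 * i) 1); [|field].
        apply (alt_shift a N 1 Alt i). }
      assert (Hs: forall i, sN a (N + 2 * i) = sN a N).
      { apply sN_pairs. apply (alt_pairs a N 1 Alt). }
      split.
      * intro Hsd.
        assert (B: forall eps, 0 < eps < 1/2 ->
                   xi - sN a N <= eps /\ - 1 - eps <= xi - sN a N).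
        { intros eps He. destruct (red_nec x k a xi Hdig Hcv Hsd eps ltac:(lra)) as [N0 HN0].
          specialize (HN0 (N + 2 * N0)%nat ltac:(lia)).
          rewrite Hy, Hs in HN0. rewrite T2 in HN0.
          pose proof (HN0 (1/3) ltac:(lra)) as V1. pose proof (HN0 (5/6) ltac:(lra)) as V2.
          rewrite T1 in V1. rewrite T4 in V2.
          rewrite Rabs_left1 in V1 by lra. rewrite Rabs_right in V2 by lra.
          split; lra. }
        split.
        -- apply le_eps. intros eps He. destruct (B eps He). lra.
        -- apply le_eps. intros eps He. destruct (B eps He). lra.
      * intros [L U]. apply (red_suf x k a xi N Hdig Hcv).
        { apply nondy_yN; auto. }
        intros v Hv. specialize (Hy 0%nat). rewrite Nat.add_0_r in Hy. rewrite Hy, T2.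
        destruct (Rle_dec v (2/3)).
        -- pose proof (T_le v). nra.
        -- pose proof (T_le_hi v ltac:(lra)). nra.
  - intros m Hd Hno2 H3 xi. destruct m as [|N]; [destruct H3; lia|].
    rewrite cst_sN by lia. replace (S N - 1)%nat with N by lia.
    pose proof (hyp3_Pairs a N H3) as HP.
    split.
    + intro Hsd.
      assert (B: forall eps, 0 < eps < 1/2 -> - eps <= xi - sN a N <= eps).
      { intros eps He. destruct (red_nec x k a xi Hdig Hcv Hsd eps ltac:(lra)) as [N0 HN0].
        pose proof (cond_of_nec x k a xi eps N0 ltac:(lra) HN0) as HC.
        destruct (auto_main a _ xi eps N0 Hdig Hcv He HC Hno2) as [N1 [HN1 [HP1 Hb]]].
        destruct (Nat.Even_or_Odd (N1 + N)) as [[p Hp]|[p Hp]].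
        - specialize (Hb N). replace (N1 + 2 * N)%nat with (N + 2 * p)%nat in Hb by lia.
          rewrite (sN_pairs a N HP p) in Hb. exact Hb.
        - exfalso. apply Hno2. exists (S (N1 + N)). apply (part3_pairs_hyp2 a N N1 p); auto. }
      apply Rle_antisym.
      * apply le_eps. intros eps He. destruct (B eps He). lra.
      * apply le_eps. intros eps He. destruct (B eps He). lra.
    + intro E. apply (red_suf x k a xi N Hdig Hcv).
      { apply nondy_yN; auto. }
      intros v Hv. rewrite (T_max_pairs a _ Hdig Hcv N HP). rewrite E.
      pose proof (T_le v). nra.
  - intros Hd Hno2 Hno3 xi Hsd.
    destruct (red_nec x k a xi Hdig Hcv Hsd (1/4) ltac:(lra)) as [N0 HN0].
    pose proof (cond_of_nec x k a xi (1/4) N0 ltac:(lra) HN0) as HC.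
    destruct (auto_main a _ xi (1/4) N0 Hdig Hcv ltac:(lra) HC Hno2) as [N1 [HN1 [HP1 Hb]]].
    apply Hno3. exists (S N1). apply Pairs_hyp3; auto.
Qed.
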